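(* For every real constant $c>0$ and every positive integer $N_0$, there exist an integer $N\ge N_0$ and a bipartite graph $W$ with $N$ vertices in each part and exactly $N^{6/5}$ edges such that $W$ is $C_{10}$-free and every subgraph of $W$ with at least $c\,|E(W)|$ edges contains a copy of $C_8$.
   Context: $C_m$ denotes the cycle of length $m$; a graph is $F$-free if it contains no subgraph isomorphic to $F$. (In the paper, $W$ is the Wenger graph $W_5(q)$: for a prime power $q$, the bipartite point–line incidence graph between $\mathbb{F}_q^5$ and the set of all affine lines $\{v+t(1,a,a^2,a^3,a^4): t\in\mathbb{F}_q\}$, $v\in\mathbb{F}_q^5$, $a\in\mathbb{F}_q$, so $N=q^5$.) *)

(* Defs.v *)
From mathcomp Require Import all_boot all_order all_algebra.
From mathcomp Require Import reals.
Set Implicit Arguments. Unset Strict Implicit. Unset Printing Implicit Defensive.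

(* A bipartite graph with parts 'I_m (left) and 'I_n (right) is given by its
   edge set E : {set 'I_m * 'I_n}; (x, y) \in E means x ~ y. *)

(* Any cycle of a bipartite graph
   alternates between the parts, so this is exactly a C_{2k} subgraph. *)
Definition has_cycle2 (m n k : nat) (E : {set 'I_m * 'I_n}) : Prop :=
  exists (a : 'I_k -> 'I_m) (b : 'I_k -> 'I_n),
    injective a /\ injective b /\
    forall i : 'I_k, (a i, b i) \in E /\ (a (ordS i), b i) \in E.

(* Main.v *)
Require Import Defs.
From mathcomp Require Import all_boot all_order all_algebra.
From mathcomp Require Import reals.
From mathcomp Require Import ring lra zify.
From Stdlib Require Import Classical.
Import GRing.Theory Num.Theory.
Set Implicit Arguments. Unset Strict Implicit. Unset Printing Implicit Defensive.

Local Open Scope ring_scope.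

Section Geo.
Variable F : fieldType.
Definition vv (a : F) : 'rV[F]_5 := \row_(j < 5) a ^+ j.
Definition ell (P : 'rV[F]_5) (a : F) : F * 'rV[F]_4 :=
  (a, \row_(j < 4) (P 0 (lift ord0 j) - P 0 0 * a ^+ (lift ord0 j))).

Lemma ell_eq P P' a : ell P a = ell P' a -> P' = P + (P' 0 0 - P 0 0) *: vv a.
Proof.
case=> /matrixP E; apply/matrixP => i k; rewrite !mxE.
rewrite (ord1 i); case: (unliftP ord0 k) => [j ->|->].
  have := E 0 j; rewrite !mxE => e.
  have -> : P' 0 (lift ord0 j) = P 0 (lift ord0 j) - P 0 0 * a ^+ (lift ord0 j) + P' 0 0 * a ^+ (lift ord0 j).
    by rewrite e; ring.
  ring.
by rewrite expr0; ring.
Qed.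

Lemma ell_trans P s a : ell (P + s *: vv a) a = ell P a.
Proof.
congr pair; apply/matrixP => i j; rewrite !mxE /=; ring.
Qed.

Lemma vv01 (s u a b : F) : s *: vv a = u *: vv b -> s = u /\ (a != b -> s = 0).
Proof.
move/matrixP=> E; have e0 := E 0 0; have e1 := E 0 1.
rewrite !mxE !expr0 !expr1 !mulr1 in e0 e1; split => // nab.
subst u; apply/eqP; move: nab; apply: contraR => s0.
by rewrite -(mulrI _ e1) // unitfE.
Qed.

Lemma geoG P P' a b : a != b -> ell P a = ell P' a -> ell P b = ell P' b -> P = P'.
Proof.
move=> nab /ell_eq ea /ell_eq eb.
have : (P' 0 0 - P 0 0) *: vv a = (P' 0 0 - P 0 0) *: vv b.
  by apply: (addrI P); rewrite -ea -eb.
case/vv01 => _ /(_ nab) s0.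
by rewrite ea s0 scale0r addr0.
Qed.
End Geo.

Local Open Scope ring_scope.

Lemma alg (F : fieldType) (d t : 'I_5 -> F) i : t i != 0 ->
  (forall j, j != i -> d j != d i) -> \sum_j t j *: vv (d j) != 0.
Proof.
move=> ti0 uni; apply/eqP => S0.
pose s := [seq d j | j <- enum (predC1 i)].
pose L := \prod_(x <- s) ('X - x%:P).
have sz : (size s = 4)%N.
  by rewrite size_map -cardE cardC1 card_ord.
have Lsz : (size L <= 5)%N by rewrite size_prod_XsubC sz.
have key : \sum_j t j * L.[d j] = 0.
  transitivity (\sum_(k < 5) L`_k * (\sum_j t j *: vv (d j)) 0 k); last first.
    by rewrite S0; apply: big1 => k _; rewrite mxE mulr0.
  under eq_bigr => j _ do rewrite (horner_coef_wide _ Lsz) big_distrr.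
  rewrite exchange_big; apply: eq_bigr => k _.
  rewrite summxE big_distrr; apply: eq_bigr => j _; rewrite !mxE.
  exact: mulrCA.
move: key; rewrite (bigD1 i) //= big1 ?addr0 => [|j ji].
  apply/eqP; rewrite mulf_eq0 negb_or ti0 /=.
  rewrite -/(root L (d i)) root_prod_XsubC.
  apply/mapP => -[j]; rewrite mem_enum => ji e.
  by have := uni j ji; rewrite e eqxx.
apply/eqP; rewrite mulf_eq0; apply/orP; right.
rewrite -/(root L (d j)) root_prod_XsubC.
by apply/mapP; exists j => //; rewrite mem_enum.
Qed.

Local Open Scope ring_scope.

Lemma ord5P (P : 'I_5 -> Prop) :
  P (inord 0) -> P (inord 1) -> P (inord 2) -> P (inord 3) -> P (inord 4) ->
  forall j, P j.
Proof.
move=> p0 p1 p2 p3 p4 [[|[|[|[|[|m]]]]] Hm] //.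
- by have -> : Ordinal Hm = inord 0 by apply/val_inj; rewrite /= inordK.
- by have -> : Ordinal Hm = inord 1 by apply/val_inj; rewrite /= inordK.
- by have -> : Ordinal Hm = inord 2 by apply/val_inj; rewrite /= inordK.
- by have -> : Ordinal Hm = inord 3 by apply/val_inj; rewrite /= inordK.
- by have -> : Ordinal Hm = inord 4 by apply/val_inj; rewrite /= inordK.
Qed.

Lemma ordS5 k l : (k < 5)%N -> (k.+1 %% 5 = l)%N -> ordS (inord k : 'I_5) = inord l.
Proof. by move=> hk <-; apply/val_inj; rewrite /= !inordK // ltn_pmod. Qed.

Lemma inord_neq k l : (k < 5)%N -> (l < 5)%N -> k != l -> (inord k : 'I_5) != inord l.
Proof. by move=> hk hl kl; apply/eqP => /(congr1 val); rewrite /= !inordK //; apply/eqP. Qed.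

Ltac cl E := first [done | by rewrite eq_sym | by match goal with H : is_true (?x != ?x) |- _ => rewrite eqxx in H end
   | by rewrite E | by rewrite E eq_sym | by rewrite -E | by rewrite -E eq_sym].

Lemma five (T : eqType) (d : 'I_5 -> T) :
  (forall i, d i != d (ordS i)) -> exists i, forall j, j != i -> d j != d i.
Proof.
move=> H.
have h01 : d (inord 0) != d (inord 1) by have := H (inord 0); rewrite (@ordS5 0 _ _ erefl).
have h12 : d (inord 1) != d (inord 2) by have := H (inord 1); rewrite (@ordS5 1 _ _ erefl).
have h23 : d (inord 2) != d (inord 3) by have := H (inord 2); rewrite (@ordS5 2 _ _ erefl).
have h34 : d (inord 3) != d (inord 4) by have := H (inord 3); rewrite (@ordS5 3 _ _ erefl).
have h40 : d (inord 4) != d (inord 0) by have := H (inord 4); rewrite (@ordS5 4 _ _ erefl).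
move: h01 h12 h23 h34 h40.
set x0 := d (inord 0); set x1 := d (inord 1); set x2 := d (inord 2);
set x3 := d (inord 3); set x4 := d (inord 4).
move=> h01 h12 h23 h34 h40.
have pick : forall i : 'I_5, (forall j, j != i -> d j != d i) -> exists i, forall j, j != i -> d j != d i.
  by move=> i hi; exists i.
have nd := inord_neq.
case: (eqVneq x0 x2) => [e02|n02].
  case: (eqVneq x4 x1) => [e41|n41].
    apply: (pick (inord 3)); apply: ord5P => /= hj;
      rewrite -/x0 -/x1 -/x2 -/x3 -/x4; first [cl e41 | cl e02].
  apply: (pick (inord 4)); apply: ord5P => /= hj;
    rewrite -/x0 -/x1 -/x2 -/x3 -/x4; cl e02.
case: (eqVneq x0 x3) => [e03|n03].
  case: (eqVneq x1 x4) => [e14|n14].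
    apply: (pick (inord 2)); apply: ord5P => /= hj;
      rewrite -/x0 -/x1 -/x2 -/x3 -/x4; first [cl e14 | cl e03].
  apply: (pick (inord 1)); apply: ord5P => /= hj;
    rewrite -/x0 -/x1 -/x2 -/x3 -/x4; cl e03.
apply: (pick (inord 0)); apply: ord5P => /= hj;
  rewrite -/x0 -/x1 -/x2 -/x3 -/x4; cl n02.
Qed.

Local Open Scope ring_scope.

Definition hc2 (A B : finType) k (E : {set A * B}) : Prop :=
  exists (a : 'I_k -> A) (b : 'I_k -> B),
    injective a /\ injective b /\
    forall i : 'I_k, (a i, b i) \in E /\ (a (ordS i), b i) \in E.

Lemma ordS5_neq (i : 'I_5) : ordS i != i.
Proof.
move: i; apply: ord5P.
- by rewrite (@ordS5 0 1) // inord_neq.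
- by rewrite (@ordS5 1 2) // inord_neq.
- by rewrite (@ordS5 2 3) // inord_neq.
- by rewrite (@ordS5 3 4) // inord_neq.
- by rewrite (@ordS5 4 0) // inord_neq.
Qed.

Section W.
Variable F : finFieldType.
Definition W0 : {set 'rV[F]_5 * (F * 'rV[F]_4)} := [set x | x.2 == ell x.1 x.2.1].

Lemma W0_C10 : ~ hc2 5 W0.
Proof.
move=> [a [b [ia [ib E]]]].
have edge i : b i = ell (a i) (b i).1 /\ b i = ell (a (ordS i)) (b i).1.
  by case: (E i); rewrite !inE => /eqP e1 /eqP e2.
pose d i := (b i).1; pose t i := a (ordS i) 0 0 - a i 0 0.
have step i : a (ordS i) = a i + t i *: vv (d i).
  by apply: ell_eq; case: (edge i) => <- <-.
have S0 : \sum_i t i *: vv (d i) = 0.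
  transitivity (\sum_i (a (ordS i) - a i)).
    by apply: eq_bigr => i _; rewrite step addrC addKr.
  by rewrite sumrB [X in _ - X](reindex_inj (can_inj (@ordSK 5))) /= subrr.
have tn0 i : t i != 0.
  apply/eqP => t0; have := step i; rewrite t0 scale0r addr0 => /ia e.
  by have := ordS5_neq i; rewrite e eqxx.
have dn i : d i != d (ordS i).
  apply/eqP => e; have : b (ordS i) = b i.
    case: (edge (ordS i)) => -> _; case: (edge i) => _ ->.
    by rewrite -/(d i) -/(d (ordS i)) e.
  move/ib => e'; by have := ordS5_neq i; rewrite e' eqxx.
have [i ui] := five dn.
by have := alg (tn0 i) ui; rewrite S0 eqxx.
Qed.
End W.

Local Open Scope ring_scope.

Lemma ord4P (P : 'I_4 -> Prop) :
  P (inord 0) -> P (inord 1) -> P (inord 2) -> P (inord 3) -> forall j, P j.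
Proof.
move=> p0 p1 p2 p3 [[|[|[|[|m]]]] Hm] //.
- by have -> : Ordinal Hm = inord 0 by apply/val_inj; rewrite /= inordK.
- by have -> : Ordinal Hm = inord 1 by apply/val_inj; rewrite /= inordK.
- by have -> : Ordinal Hm = inord 2 by apply/val_inj; rewrite /= inordK.
- by have -> : Ordinal Hm = inord 3 by apply/val_inj; rewrite /= inordK.
Qed.

Lemma ordS4 k l : (k < 4)%N -> (k.+1 %% 4 = l)%N -> ordS (inord k : 'I_4) = inord l.
Proof. by move=> hk <-; apply/val_inj; rewrite /= !inordK // ltn_pmod. Qed.

Lemma nth_inj (T : eqType) (x0 : T) (s : seq T) :
  uniq s -> injective (fun i : 'I_(size s) => nth x0 s i).
Proof. by move=> us i j /eqP; rewrite nth_uniq // => /eqP/val_inj. Qed.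

Section Rect.
Variable F : finFieldType.
Variable S : {set 'rV[F]_5 * F}.
Definition gS (x : 'rV[F]_5 * F) := (x.1, ell x.1 x.2).

Lemma rect (a b : F) P1 P1' P2 P2' :
  a != b ->
  (P1, a) \in S -> (P1, b) \in S -> (P1', a) \in S -> (P1', b) \in S ->
  (P2, a) \in S -> (P2, b) \in S -> (P2', a) \in S -> (P2', b) \in S ->
  ell P1 a = ell P1' a -> ell P2 a = ell P2' a -> ell P1 b = ell P2 b ->
  P1' 0 0 - P1 0 0 = P2' 0 0 - P2 0 0 ->
  P1 != P1' -> P1 != P2 -> hc2 4 (gS @: S).
Proof.
move=> nab s1a s1b s1'a s1'b s2a s2b s2'a s2'b l1 l2 l12 es n11 n12.
have e1 := ell_eq l1; have e2 := ell_eq l2; have e12 := ell_eq l12.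
have l12' : ell P1' b = ell P2' b.
  move: e1 e2 e12; rewrite -es.
  move: (P1' 0 0 - P1 0 0) (P2 0 0 - P1 0 0) => s u -> -> ->.
  have -> : P1 + u *: vv b + s *: vv a = P1 + s *: vv a + u *: vv b.
    by rewrite -!addrA [u *: _ + _]addrC.
  by rewrite ell_trans.
have G := @geoG _ _ _ _ _ nab.
have n12' : P1 != P2'.
  apply: contra n12 => /eqP e; apply/eqP; apply: G; last exact: l12.
  by rewrite e l2.
have n1'2 : P1' != P2.
  apply: contra n12 => /eqP e; apply/eqP; apply: G; last exact: l12.
  by rewrite l1 e.
have n1'2' : P1' != P2'.
  apply: contra n12 => /eqP e; apply/eqP; apply: G; last exact: l12.
  by rewrite l1 e l2.
have n22' : P2 != P2'.
  apply: contra n11 => /eqP e; apply/eqP; apply: G; first exact: l1.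
  by rewrite l12 e l12'.
pose pts := [:: P1; P1'; P2'; P2].
pose lns := [:: ell P1 a; ell P1' b; ell P2' a; ell P2 b].
have upts : uniq pts.
  rewrite /pts /= !inE !negb_or n11 n12' n12 n1'2' n1'2 eq_sym n22' /=.
  done.
have ulns : uniq lns.
  have dab X Y : ell X a != ell Y b by rewrite /ell xpair_eqE negb_and nab.
  have dba X Y : ell X b != ell Y a by rewrite /ell xpair_eqE negb_and eq_sym nab.
  have n1 : ell P1 a != ell P2' a.
    apply: contra n12 => /eqP e; apply/eqP; apply: G; last exact: l12.
    by rewrite e l2.
  have n2 : ell P1' b != ell P2 b.
    apply: contra n11 => /eqP e; apply/eqP; apply: G; first exact: l1.
    by rewrite l12 e.
  by rewrite /lns /= !inE !negb_or !dab !dba n1 n2.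
exists (fun i => nth P1 pts i), (fun i => nth (ell P1 a) lns i).
split; first by move=> i j; apply: (@nth_inj _ P1 pts upts i j).
split; first by move=> i j; apply: (@nth_inj _ (ell P1 a) lns ulns i j).
have gi Q d : (Q, d) \in S -> (Q, ell Q d) \in gS @: S.
  by move=> h; apply/imsetP; exists (Q, d).
apply: ord4P; rewrite ?(@ordS4 0 1) ?(@ordS4 1 2) ?(@ordS4 2 3) ?(@ordS4 3 0) //=
  ?inordK //=; split; rewrite ?gi //.
- by rewrite l1 gi.
- by rewrite l12' gi.
- by rewrite -l2 gi.
- by rewrite -l12 gi.
Qed.
End Rect.

Local Close Scope ring_scope.

Lemma CS (T : finType) (f : T -> nat) : (\sum_i f i) ^ 2 <= #|T| * \sum_i f i ^ 2.
Proof.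
rewrite -(leq_pmul2l (isT : 0 < 2)).
have cT : forall n, \sum_(i : T) n = #|T| * n.
  by move=> n; rewrite sum_nat_const; congr (_ * _); apply: eq_card.
have -> : (\sum_i f i) ^ 2 = \sum_i \sum_j f i * f j.
  by rewrite expnS expn1 big_distrl /=; apply: eq_bigr => i _; rewrite big_distrr.
have -> : 2 * (#|T| * \sum_i f i ^ 2) = \sum_i \sum_j (f i ^ 2 + f j ^ 2).
  symmetry.
  rewrite (eq_bigr (fun i => f i ^ 2 * #|T| + \sum_j f j ^ 2)) => [|i _]; last first.
    by rewrite big_split /= cT mulnC.
  rewrite big_split /= cT -big_distrl /=.
  lia.
rewrite big_distrr /= leq_sum // => i _; rewrite big_distrr /= leq_sum // => j _.
move: (f i) (f j) => x y.
rewrite !expnS !expn0 !muln1.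
case: (leqP y x) => h.
  have [k ->] : exists k, x = y + k by exists (x - y); lia.
  nia.
have [k ->] : exists k, y = x + k by exists (y - x); lia.
nia.
Qed.

Lemma card_sumI (T : finType) (A : {set T}) : #|A| = \sum_i (i \in A : nat).
Proof. by rewrite -sum1_card big_mkcond /=; apply: eq_bigr => i _; case: (i \in A). Qed.

Local Close Scope ring_scope.

Lemma sumT_const (T : finType) n : \sum_(i : T) n = #|T| * n.
Proof. by rewrite sum_nat_const; congr (_ * _); apply: eq_card. Qed.

Lemma sq_sum (T : finType) (f : T -> nat) : (\sum_i f i) ^ 2 = \sum_i \sum_j f i * f j.
Proof. by rewrite expnS expn1 big_distrl /=; apply: eq_bigr => i _; rewrite big_distrr. Qed.

Lemma fiber_sum (T U : finType) (h : T -> U) (p : T -> bool) :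
  \sum_u \sum_t ((p t) && (h t == u) : nat) = \sum_t (p t : nat).
Proof.
rewrite exchange_big; apply: eq_bigr => t _ /=.
rewrite (bigD1 (h t)) //= eqxx andbT big1 ?addn0 // => u /negbTE.
by rewrite eq_sym => ->; rewrite andbF.
Qed.

Lemma fiber_sq (T U : finType) (h : T -> U) (p : T -> bool) :
  \sum_u (\sum_t ((p t) && (h t == u) : nat)) ^ 2 =
  \sum_t \sum_t' ((p t && p t' && (h t == h t')) : nat).
Proof.
under eq_bigr => u _ do rewrite sq_sum.
rewrite exchange_big; apply: eq_bigr => t _ /=.
rewrite exchange_big; apply: eq_bigr => t' _ /=.
case: (p t); case: (p t'); rewrite /=;
  [ | by rewrite big1 // => u; rewrite muln0 | by rewrite big1 | by rewrite big1].
rewrite (bigD1 (h t)) //= eqxx big1 ?addn0 => [|u /negbTE]; last first.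
  by rewrite eq_sym => ->.
by rewrite mul1n eq_sym.
Qed.

Lemma pair_card (T : finType) (D : {set T * T}) :
  #|D| = \sum_t \sum_t' (((t, t') \in D) : nat).
Proof. by rewrite card_sumI pair_big; apply: eq_bigr => -[]. Qed.

Local Close Scope ring_scope.

Section Count.
Variable F : finFieldType.
Variable S : {set 'rV[F]_5 * F}.
Hypothesis noC8 : ~ hc2 4 (@gS F @: S).
Local Notation V := 'rV[F]_5.
Local Notation q := #|F|.

Definition ind (P : V) a : nat := (P, a) \in S.
Definition dg P := \sum_a ind P a.
Definition xab a b := \sum_P ind P a * ind P b.

Lemma cardV : #|V| = q ^ 5. Proof. by rewrite card_mx. Qed.
Lemma cardR4 : #|'rV[F]_4| = q ^ 4. Proof. by rewrite card_mx. Qed.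

Lemma cardS_dg : #|S| = \sum_P dg P.
Proof. by rewrite card_sumI pair_big; apply: eq_bigr => -[]. Qed.

Lemma dg2 : \sum_P dg P ^ 2 = \sum_a \sum_b xab a b.
Proof.
under eq_bigr => P _ do rewrite /dg sq_sum.
rewrite exchange_big; apply: eq_bigr => a _ /=.
by rewrite exchange_big.
Qed.

Lemma diag_x : \sum_a xab a a = #|S|.
Proof.
rewrite cardS_dg exchange_big; apply: eq_bigr => P _; apply: eq_bigr => a _.
by rewrite /ind mulnb andbb.
Qed.

Definition Sig := \sum_a \sum_b (if a != b then xab a b else 0).

Lemma sig_eq : Sig + #|S| = \sum_P dg P ^ 2.
Proof.
rewrite dg2 -diag_x -big_split; apply: eq_bigr => a _ /=.
rewrite [in RHS](bigD1 a) //= [in LHS](bigD1 a) //= eqxx add0n addnC; congr (_ + _).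
by apply: eq_bigr => b; rewrite eq_sym => ->.
Qed.

Lemma m_bound : #|S| ^ 2 <= q ^ 5 * (Sig + #|S|).
Proof. by rewrite sig_eq cardS_dg -cardV CS. Qed.

Lemma ellE (P : V) a : ell P a = (a, (ell P a).2). Proof. by []. Qed.

Lemma x_bound a b : a != b -> xab a b ^ 2 <= 2 * q ^ 9.
Proof.
move=> nab.
pose X := [set P : V | ((P, a) \in S) && ((P, b) \in S)].
have xX : xab a b = #|X|.
  by rewrite card_sumI; apply: eq_bigr => P _; rewrite /ind inE mulnb.
pose la (P : V) := (ell P a).2.
have X1 : #|X| = \sum_Q \sum_P ((P \in X) && (la P == Q) : nat).
  by rewrite fiber_sum card_sumI.
have X2 : #|X| ^ 2 <= q ^ 4 * \sum_P \sum_P' ((P \in X) && (P' \in X) && (la P == la P') : nat).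
  by rewrite -fiber_sq X1 -cardR4 CS.
pose D := [set pp : V * V | [&& pp.1 \in X, pp.2 \in X, la pp.1 == la pp.2 & pp.1 != pp.2]].
have X3 : \sum_P \sum_P' ((P \in X) && (P' \in X) && (la P == la P') : nat) = #|D| + #|X|.
  rewrite pair_card card_sumI -big_split; apply: eq_bigr => P _ /=.
  rewrite (bigD1 P) //= [in X in _ = X + _](bigD1 P) //=.
  rewrite eqxx andbT andbb [((P,P) \in D)]inE /= !eqxx /= !andbF add0n addnC.
  congr (_ + _); apply: eq_bigr => P' nP.
  by rewrite [in RHS]inE /= (eq_sym P P') nP andbT !andbA.
pose f (pp : V * V) := ((ell pp.1 b).2, (pp.2 ord0 ord0 - pp.1 ord0 ord0)%R).
have finj : {in D &, injective f}.
  move=> [P1 P1'] [P2 P2'] hD1 hD2 /= e.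
  rewrite !inE /= in hD1 hD2.
  case/and4P: hD1 => /andP[s1a s1b] /andP[s1'a s1'b] L1 N1.
  case/and4P: hD2 => /andP[s2a s2b] /andP[s2'a s2'b] L2 N2.
  case: e => eb es.
  have l1 : ell P1 a = ell P1' a by rewrite ellE (ellE P1'); congr pair; exact: (eqP L1).
  have l2 : ell P2 a = ell P2' a by rewrite ellE (ellE P2'); congr pair; exact: (eqP L2).
  have l12 : ell P1 b = ell P2 b by rewrite ellE (ellE P2); congr pair; exact: eb.
  case: (eqVneq P1 P2) => [e12 | n12].
    subst P2; congr pair.
    by rewrite (ell_eq l1) [in RHS](ell_eq l2) es.
  exfalso; apply: noC8.
  exact: (@rect _ S a b P1 P1' P2 P2' nab s1a s1b s1'a s1'b s2a s2b s2'a s2'b l1 l2 l12 es N1 n12).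
have X4 : #|D| <= q ^ 5.
  rewrite -(card_in_imset finj).
  apply: leq_trans (max_card _) _.
  by rewrite card_prod cardR4 -expnSr.
have X5 : #|X| <= q ^ 5 by rewrite -cardV max_card.
rewrite xX; apply: (leq_trans X2); rewrite X3.
have : #|D| + #|X| <= 2 * q ^ 5 by lia.
move=> h; apply: leq_trans (leq_mul (leqnn _) h) _.
by rewrite mulnCA -expnD.
Qed.

Lemma sig_bound : Sig ^ 2 <= 2 * q ^ 13.
Proof.
pose y (p : F * F) := if p.1 != p.2 then xab p.1 p.2 else 0.
have -> : Sig = \sum_p y p by rewrite /Sig pair_big.
apply: leq_trans (CS _) _.
have h : \sum_p y p ^ 2 <= \sum_(p : F * F) 2 * q ^ 9.
  apply: leq_sum => -[a b] _; rewrite /y /=.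
  by case: ifP => [nab|]; [exact: x_bound | rewrite expnS mul0n].
apply: leq_trans (leq_mul (leqnn _) h) _.
rewrite sumT_const card_prod.
have -> : 2 * q ^ 13 = q * q * (q * q * (2 * q ^ 9)).
  rewrite !expnS; lia.
by [].
Qed.

Lemma count_final : exists Sg, #|S| ^ 2 <= q ^ 5 * (Sg + #|S|) /\ Sg ^ 2 <= 2 * q ^ 13.
Proof. by exists Sig; split; [exact: m_bound | exact: sig_bound]. Qed.
End Count.

Local Open Scope ring_scope.

Lemma real_contra (R : realFieldType) (c q m Sg : R) :
  0 < c -> 0 <= Sg -> 2 < c * q -> 8 < c ^+ 4 * q ->
  c * q ^+ 6 <= m -> m ^+ 2 <= q ^+ 5 * (Sg + m) -> Sg ^+ 2 <= 2 * q ^+ 13 -> False.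
Proof.
move=> c0 S0 cq2 cq8.
have q0 : 0 < q by nra.
have Y0 : 0 < q ^+ 5 by rewrite exprn_gt0.
rewrite (_ : q ^+ 6 = q * q ^+ 5); last by rewrite -exprS.
rewrite (_ : q ^+ 13 = q ^+ 3 * (q ^+ 5 * q ^+ 5)); last by rewrite -!exprD.
have q30 : 0 < q ^+ 3 by rewrite exprn_gt0.
move: Y0; move: (q ^+ 5) => Y Y0 hm h1 h2.
have mY : 2 * Y <= m by nra.
have m0 : 0 <= m by nra.
have h3 : m * m <= 2 * Y * Sg.
  have d0 : 0 <= m - 2 * Y by rewrite subr_ge0.
  have := mulr_ge0 d0 m0; rewrite expr2 in h1; nra.
have hm0 : 0 <= c * (q * Y) by nra.
have h4 : (c * (q * Y)) * (c * (q * Y)) <= m * m by apply: ler_pM.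
have h5 : c * c * q * q * Y <= 2 * Sg.
  have : (c * c * q * q * Y) * Y <= (2 * Sg) * Y by nra.
  by rewrite ler_pM2r.
have h50 : 0 <= c * c * q * q * Y by nra.
have h6 := ler_pM h50 h50 h5 h5.
have : c ^+ 4 * q * (q ^+ 3 * (Y * Y)) <= 8 * (q ^+ 3 * (Y * Y)).
  have e : (c * c * q * q * Y) * (c * c * q * q * Y) = c ^+ 4 * q * (q ^+ 3 * (Y * Y)) by ring.
  rewrite e in h6; rewrite expr2 in h2; lra.
rewrite ler_pM2r; first lra.
by rewrite !mulr_gt0.
Qed.

Local Close Scope ring_scope.

Lemma transfer (A B : finType) N (hA : #|A| = N) (hB : #|B| = N) (W0 : {set A * B}) :
  exists W : {set 'I_N * 'I_N},
    [/\ #|W| = #|W0|, (forall k, has_cycle2 k W -> hc2 k W0) &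
     forall Fs : {set 'I_N * 'I_N}, Fs \subset W ->
       exists F0 : {set A * B}, [/\ F0 \subset W0, #|F0| = #|Fs| &
          (forall k, hc2 k F0 -> has_cycle2 k Fs)]].
Proof.
pose ea (i : 'I_N) := enum_val (cast_ord (esym hA) i).
pose ra (x : A) := cast_ord hA (enum_rank x).
pose eb (i : 'I_N) := enum_val (cast_ord (esym hB) i).
pose rb (x : B) := cast_ord hB (enum_rank x).
have eaK : cancel ea ra by move=> i; rewrite /ea /ra enum_valK cast_ordKV.
have raK : cancel ra ea by move=> x; rewrite /ea /ra cast_ordK enum_rankK.
have ebK : cancel eb rb by move=> i; rewrite /eb /rb enum_valK cast_ordKV.
have rbK : cancel rb eb by move=> x; rewrite /eb /rb cast_ordK enum_rankK.
pose h (x : 'I_N * 'I_N) := (ea x.1, eb x.2).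
pose h' (y : A * B) := (ra y.1, rb y.2).
have hK : cancel h h' by move=> [i j]; rewrite /h /h' /= eaK ebK.
have h'K : cancel h' h by move=> [x y]; rewrite /h /h' /= raK rbK.
have hinj : injective h := can_inj hK.
pose W := [set x | h x \in W0].
have imW : h @: W = W0.
  apply/setP => y; apply/imsetP/idP => [[x]|yW]; first by rewrite inE => xW ->.
  by exists (h' y); rewrite ?inE h'K.
exists W; split.
- by rewrite -imW card_imset.
- move=> k [a [b [ia [ib E]]]].
  exists (ea \o a), (eb \o b); split; first exact: inj_comp (can_inj eaK) ia.
  split; first exact: inj_comp (can_inj ebK) ib.
  by move=> i; case: (E i); rewrite !inE.
move=> Fs sFW; exists (h @: Fs); split.
- by rewrite -imW imsetS.
- by rewrite card_imset.
move=> k [a [b [ia [ib E]]]].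
exists (ra \o a), (rb \o b); split; first exact: inj_comp (can_inj raK) ia.
split; first exact: inj_comp (can_inj rbK) ib.
have mem y : y \in h @: Fs -> h' y \in Fs.
  by case/imsetP => x xF ->; rewrite hK.
by move=> i; case: (E i) => /mem e1 /mem e2.
Qed.

Local Close Scope ring_scope.
Import Order.TTheory.

Section Wc.
Variable F : finFieldType.

Lemma gS_inj : injective (@gS F).
Proof. by move=> [P a] [P' a'] [-> -> _]. Qed.

Lemma W0_img : W0 F = @gS F @: setT.
Proof.
apply/setP => y; rewrite inE; apply/eqP/imsetP => [e|[x _ ->]] //.
by exists (y.1, y.2.1); rewrite // /gS /= -e; case: y e.
Qed.

Lemma card_W0 : #|W0 F| = (#|'rV[F]_5| * #|F|)%N.
Proof. by rewrite W0_img card_imset ?cardsT ?card_prod //; exact: gS_inj. Qed.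

Lemma sub_W0 (F0 : {set 'rV[F]_5 * (F * 'rV[F]_4)}) :
  F0 \subset W0 F -> F0 = @gS F @: (@gS F @^-1: F0).
Proof.
move=> sF; apply/setP => y; apply/idP/imsetP => [yF|[x]]; last by rewrite inE => h ->.
have : y \in W0 F by apply: (subsetP sF).
rewrite W0_img => /imsetP [x _ e]; exists x => //; by rewrite inE -e.
Qed.
End Wc.

Local Open Scope ring_scope.

Theorem theorem1p3 (R : realType) (c : R) (N0 : nat) :
  0 < c -> (0 < N0)%N ->
  exists (N : nat) (W : {set 'I_N * 'I_N}),
    [/\ (N0 <= N)%N,
        (#|W| ^ 5 = N ^ 6)%N,
        ~ has_cycle2 5 W &
        forall F : {set 'I_N * 'I_N},
          F \subset W -> c * (#|W|)%:R <= (#|F|)%:R -> has_cycle2 4 F].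
Proof.
move=> c0 N00.
have x0 : 0 <= 8 / c ^+ 4 + 2 / c.
  by rewrite addr_ge0 // divr_ge0 // ?exprn_ge0 // ltW.
set K := Num.bound (8 / c ^+ 4 + 2 / c).
case: (prime_above (maxn K N0)) => p hp pp.
have p0 : (0 < p)%N by exact: prime_gt0.
have hA : #|'rV['F_p]_5| = (p ^ 5)%N by rewrite card_mx card_Fp.
have hB : #|{: 'F_p * 'rV['F_p]_4}| = (p ^ 5)%N.
  by rewrite card_prod card_mx card_Fp // mul1n -expnS.
have [W [cW cyc sub]] := transfer hA hB (W0 _).
have cW' : #|W| = (p ^ 6)%N by rewrite cW card_W0 hA card_Fp // -expnSr.
exists (p ^ 5)%N, W; split.
- apply: leq_trans (ltnW (leq_ltn_trans (leq_maxr _ _) hp)) _.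
  by rewrite -{1}(expn1 p) leq_pexp2l.
- by rewrite cW' -!expnM.
- by move/cyc; exact: (@W0_C10 _).
move=> Fs sFs hc.
have [F0 [sF0 cF0 cyc']] := sub Fs sFs.
apply: cyc'; rewrite (sub_W0 sF0).
set S := _ @^-1: F0.
case: (classic (hc2 4 (@gS _ @: S))) => // nC; exfalso.
have [Sg [h1 h2]] := count_final nC.
have cS : #|S| = #|Fs|.
  by rewrite -cF0 [in RHS](sub_W0 sF0) card_imset //; exact: gS_inj.
rewrite card_Fp // in h1 h2.
have hK : (K < p)%N := leq_ltn_trans (leq_maxl _ _) hp.
have xK : 8 / c ^+ 4 + 2 / c < p%:R.
  apply: lt_le_trans (archi_boundP x0) _; rewrite ler_nat; exact: ltnW.
have c40 : 0 < c ^+ 4 by rewrite exprn_gt0.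
have d1 : 0 <= 8 / c ^+ 4 by rewrite divr_ge0 // ltW.
have d2 : 0 <= 2 / c by rewrite divr_ge0 // ltW.
apply: (@real_contra R c p%:R (#|S|)%:R Sg%:R c0).
- exact: ler0n.
- have : 2 / c < p%:R by lra.
  by rewrite ltr_pdivrMr // mulrC.
- have : 8 / c ^+ 4 < p%:R by lra.
  by rewrite ltr_pdivrMr // mulrC.
- by rewrite cS -natrX -cW'.
- by move: h1; rewrite -(ler_nat R) natrM natrD !natrX.
- by move: h2; rewrite -(ler_nat R) natrM !natrX.
Qed.
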